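(* Let $n$ be a positive integer and $m$ a positive even integer. Let $\mathcal{A}$ and $\mathcal{B}$ be $m$-th order $n$-dimensional real weakly symmetric tensors with $\mathcal{B}$ positive definite, and let $\lambda_{\min}$ be the smallest $\mathcal{B}_r$-eigenvalue of $\mathcal{A}$. Define $f_1:\mathbb{R}^n\to\mathbb{R}$ by $$f_1(x)=\frac{1}{2m}(\mathcal{B}x^m)^2+\frac{1}{m}\mathcal{A}x^m,$$ whose gradient is $\nabla f_1(x)=(\mathcal{B}x^m)\,\mathcal{B}x^{m-1}+\mathcal{A}x^{m-1}$. Then: (a) $f_1$ is coercive on $\mathbb{R}^n$, i.e. $f_1(x)\to+\infty$ as $\|x\|\to\infty$. (b) The critical points of $f_1$ are (i) $x=0$, and (ii) any $\mathcal{B}_r$-eigenvector $x$ of $\mathcal{A}$ associated with a $\mathcal{B}_r$-eigenvalue $\lambda<0$ of $\mathcal{A}$ satisfying $\mathcal{B}x^m=-\lambda$. (c) If $\lambda_{\min}<0$, then $f_1$ attains its global minimum value $\min f_1(x)=-\frac{1}{2m}\lambda_{\min}^2$ at any $\mathcal{B}_r$-eigenvector associated with $\lambda_{\min}$ satisfying $\mathcal{B}x^m=-\lambda_{\min}$. (d) If $\lambda_{\min}\ge0$, then $x=0$ is the unique critical point of $f_1$ and the unique global minimizer of $f_1$ on $\mathbb{R}^n$.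
   Context: An $m$-th order $n$-dimensional real tensor is an array $\mathcal{A}=(A_{i_1\cdots i_m})$ with indices in $\{1,\dots,n\}$ and real entries. For $x\in\mathbb{R}^n$, $\mathcal{A}x^m=\sum_{i_1,\dots,i_m=1}^n A_{i_1\cdots i_m}x_{i_1}\cdots x_{i_m}$, and $\mathcal{A}x^{m-1}\in\mathbb{R}^n$ has $i$-th entry $\sum_{i_2,\dots,i_m=1}^n A_{i i_2\cdots i_m}x_{i_2}\cdots x_{i_m}$. A tensor is weakly symmetric if $\nabla(\mathcal{A}x^m)=m\,\mathcal{A}x^{m-1}$ for all $x$, and positive definite if $\mathcal{A}x^m>0$ for all $x\ne0$. With $\mathcal{B}$ weakly symmetric positive definite, $\lambda\in\mathbb{R}$ is a $\mathcal{B}_r$-eigenvalue of $\mathcal{A}$, with $\mathcal{B}_r$-eigenvector $x\in\mathbb{R}^n\setminus\{0\}$, if $\mathcal{A}x^{m-1}=\lambda\,\mathcal{B}x^{m-1}$. The set of $\mathcal{B}_r$-eigenvalues is nonempty and has a smallest element $\lambda_{\min}$. *)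

(* Defs.v *)
From HB Require Import structures.
From mathcomp Require Import all_boot all_order all_algebra.
From mathcomp Require Import all_classical all_reals all_analysis.
Set Implicit Arguments. Unset Strict Implicit. Unset Printing Implicit Defensive.
Import Order.TTheory GRing.Theory Num.Theory.
Import numFieldNormedType.Exports.
Local Open Scope ring_scope.

(* An m-th order n-dimensional real tensor: entries A_(i_1 ... i_m),
   indexed by maps s : 'I_m -> 'I_n  (s k = i_(k+1)). *)
Definition tensor (R : realType) (m n : nat) := {ffun 'I_m -> 'I_n} -> R.

Definition Axm (R : realType) (m n : nat) (A : tensor R m n) (x : 'rV[R]_n) : R :=
  \sum_(s : {ffun 'I_m -> 'I_n}) A s * \prod_(k < m) x ord0 (s k).

(* (A x^(m-1))_i = sum_{i_2..i_m} A_{i i_2..i_m} x_{i_2} ... x_{i_m} *)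
Definition Axm1 (R : realType) (m n : nat) (A : tensor R m n) (x : 'rV[R]_n)
  : 'rV[R]_n :=
  \row_(i < n) \sum_(s : {ffun 'I_m -> 'I_n} |
                     [forall k : 'I_m, (nat_of_ord k == 0%N) ==> (s k == i)])
      A s * \prod_(k < m | nat_of_ord k != 0%N) x ord0 (s k).

Definition has_gradient (R : realType) (n : nat) (f : 'rV[R]_n -> R^o)
  (x g : 'rV[R]_n) : Prop :=
  forall i : 'I_n, is_derive x (delta_mx ord0 i) f (g ord0 i).

Definition critical_point (R : realType) (n : nat) (f : 'rV[R]_n -> R^o)
  (x : 'rV[R]_n) : Prop := has_gradient f x 0.

Definition weakly_symmetric (R : realType) (m n : nat) (A : tensor R m n) : Prop :=
  forall x : 'rV[R]_n, has_gradient (Axm A) x (m%:R *: Axm1 A x).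

Definition pos_def (R : realType) (m n : nat) (B : tensor R m n) : Prop :=
  forall x : 'rV[R]_n, x != 0 -> 0 < Axm B x.

Definition Br_eigenvector (R : realType) (m n : nat) (A B : tensor R m n)
  (lam : R) (x : 'rV[R]_n) : Prop :=
  x != 0 /\ Axm1 A x = lam *: Axm1 B x.

Definition Br_eigenvalue (R : realType) (m n : nat) (A B : tensor R m n)
  (lam : R) : Prop := exists x, Br_eigenvector A B lam x.

Definition f1 (R : realType) (m n : nat) (A B : tensor R m n) (x : 'rV[R]_n) : R^o :=
  (Axm B x) ^+ 2 / (2 * m)%:R + Axm A x / m%:R.

Definition coercive (R : realType) (n : nat) (f : 'rV[R]_n -> R) : Prop :=
  forall M : R, exists r : R, forall x : 'rV[R]_n, r < `|x| -> M < f x.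

(* Main.v *)
Require Import Defs.
From HB Require Import structures.
From mathcomp Require Import all_boot all_order all_algebra.
From mathcomp Require Import all_classical all_reals all_analysis.
From mathcomp Require Import ring lra.
Import Order.TTheory GRing.Theory Num.Theory.
Import numFieldNormedType.Exports.
Local Open Scope classical_set_scope.
Local Open Scope ring_scope.

Lemma fermat (R : realType) n (F : 'rV[R]_n -> R^o) u v d :
  (forall x, F u <= F x) -> is_derive u v F d -> d = 0.
Proof.
move=> Fmin [dF <-].
apply/eqP; rewrite eq_le; apply/andP; split.
  rewrite ['D_v F u]cvg_at_leftE //; apply: limr_le.
    rewrite -(cvg_at_leftE (fun h : R => h^-1 *: ((F \o shift u) _ - F u))) //.
    apply: cvg_trans dF; apply: cvg_app.
    move=> A [e egt0 Ae]; exists e => // x xe xlt0; apply: Ae => //.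
    exact/ltr0_neq0.
  near=> h; apply: mulr_le0_ge0.
    by rewrite invr_le0; apply: ltW; near: h; exact: nbhs_left_lt.
  by rewrite subr_ge0; apply: Fmin.
rewrite ['D_v F u]cvg_at_rightE //; apply: limr_ge.
  rewrite -(cvg_at_rightE (fun h : R => h^-1 *: ((F \o shift u) _ - F u))) //.
  apply: cvg_trans dF; apply: cvg_app.
  move=> A [e egt0 Ae]; exists e => // x xe xgt0; apply: Ae => //.
  exact/lt0r_neq0.
near=> h; apply: mulr_ge0.
  by rewrite invr_ge0; apply: ltW; near: h; exact: nbhs_right_gt.
by rewrite subr_ge0; apply: Fmin.
Unshelve. all: by end_near.
Qed.

Arguments fermat {R n F u v d}.
Section S.
Variables (R : realType) (m n : nat).
Implicit Types (A : tensor R m n) (x : 'rV[R]_n).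

Lemma Axm_cont A : continuous (Axm A).
Proof.
move=> x.
have -> : Axm A = \sum_(s : {ffun 'I_m -> 'I_n})
   (fun y : 'rV[R]_n => A s * \prod_(k < m) y ord0 (s k)).
  by rewrite fct_sumE.
elim/big_ind: _.
- exact: cst_continuous.
- by move=> f g cf cg; exact: (continuousD cf cg).
move=> s _.
have -> : (fun y : 'rV[R]_n => A s * \prod_(k < m) y ord0 (s k)) =
   (cst (A s)) \* \prod_(k < m) (fun y : 'rV[R]_n => y ord0 (s k)).
  by rewrite fct_prodE.
apply: continuousM; first exact: cst_continuous.
elim/big_ind: _.
- exact: (@cst_continuous _ _ (1:R) x).
- by move=> f g cf cg; apply: continuousM.
by move=> k _; apply: coord_continuous.
Qed.

Lemma Axm_Z A (t : R) x : Axm A (t *: x) = t ^+ m * Axm A x.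
Proof.
rewrite /Axm mulr_sumr; apply: eq_bigr => s _; rewrite mulrCA; congr (_ * _).
rewrite (eq_bigr (fun k => t * x ord0 (s k))) => [|k _]; last by rewrite mxE.
by rewrite big_split /= prodr_const card_ord.
Qed.

Lemma Axm1_Z A (t : R) x :
  Axm1 A (t *: x) = (\prod_(k < m | nat_of_ord k != 0%N) t) *: Axm1 A x.
Proof.
apply/rowP => i; rewrite !mxE mulr_sumr; apply: eq_bigr => s _.
rewrite mulrCA; congr (_ * _).
rewrite (eq_bigr (fun k => t * x ord0 (s k))) => [|k _]; last by rewrite mxE.
by rewrite big_split.
Qed.

Lemma Euler A x : (0 < m)%N -> Axm A x = \sum_i x ord0 i * Axm1 A x ord0 i.
Proof.
move=> m0; pose k0 : 'I_m := Ordinal m0.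
rewrite /Axm (partition_big (fun s : {ffun 'I_m -> 'I_n} => s k0) predT) //=.
apply: eq_bigr => i _; rewrite mxE mulr_sumr.
apply: eq_big => [s|s /eqP si].
  apply/eqP/forallP => [si k|/(_ k0)/implyP H]; last by apply/eqP; apply: H.
  by apply/implyP => /eqP k0'; rewrite (_ : k = k0) ?si //; apply/val_inj.
rewrite (bigD1 k0) //= si mulrCA; congr (_ * (_ * _)).
Qed.



Lemma grad_f1 A B : (0 < m)%N -> weakly_symmetric A -> weakly_symmetric B ->
  forall x, has_gradient (f1 A B) x (Axm B x *: Axm1 B x + Axm1 A x).
Proof.
move=> m0 wA wB x i.
have E : f1 A B = (((2 * m)%:R : R)^-1 \*: (Axm B ^+ 2)) + ((m%:R : R)^-1 \*: Axm A).
  by apply/funext => y; rewrite /f1 /= (mulrC (Axm B y ^+ 2)) (mulrC (Axm A y)).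
rewrite E; apply: is_derive_eq.
  apply: is_deriveD; apply: is_deriveZ; [apply: is_deriveX; exact: (wB x i)|exact: (wA x i)].
rewrite !mxE /=; have m0' : (m%:R : R) != 0 by rewrite pnatr_eq0 -lt0n.
rewrite /GRing.scale /= natrM expr1; field; by rewrite m0' ?andbT.
Qed.



Lemma Axm0 A : (0 < m)%N -> Axm A 0 = 0.
Proof. by move=> m0; rewrite -(scale0r (0 : 'rV[R]_n)) Axm_Z expr0n (negbTE (lt0n_neq0 m0)) mul0r. Qed.

Lemma sphere_compact : compact [set x : 'rV[R]_n | `|x| = 1].
Proof.
apply: bounded_closed_compact.
  rewrite /= /bounded_near; near=> M => x /= ->; near: M.
  by apply: nbhs_pinfty_ge.
have -> : [set x : 'rV[R]_n | `|x| = 1] = (fun x : 'rV[R]_n => `|x|) @^-1` [set r : R | r = 1] by [].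
apply: preimage_closed; last exact: closed_eq.
by move=> x _; apply: norm_continuous.
Unshelve. all: by end_near.
Qed.

Lemma rayleigh A B lmin : (0 < n)%N -> (0 < m)%N ->
  weakly_symmetric A -> weakly_symmetric B -> pos_def B ->
  (forall lam, Br_eigenvalue A B lam -> lmin <= lam) ->
  forall y, lmin * Axm B y <= Axm A y.
Proof.
move=> n0 m0 wA wB pB lmin_min.
pose S := [set x : 'rV[R]_n | `|x| = 1].
have normS y : y != 0 -> S (`|y|^-1 *: y).
  move=> y0; rewrite /S /= normrZ normrV ?unitfE ?normr_eq0 // normr_id mulVf //.
  by rewrite normr_eq0.
have S0 : S !=set0.
  pose k0 : 'I_n := Ordinal n0.
  have : (const_mx 1 : 'rV[R]_n) != 0.
    by apply/eqP => /matrixP /(_ ord0 k0); rewrite !mxE; apply/eqP; exact: oner_neq0.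
  by move=> /normS H; eexists; exact: H.
have Sn0 x : S x -> x != 0 by rewrite /S /= => Hx; apply/eqP => x0; move: Hx; rewrite x0 normr0 => /eqP; rewrite eq_sym oner_eq0.
pose phi x := Axm A x / Axm B x.
have cphi : {within S, continuous phi}.
  apply: continuous_in_subspaceT => x /set_mem Sx.
  apply: continuousM; first exact: Axm_cont.
  apply: continuousV; last exact: Axm_cont.
  by rewrite gt_eqF // pB // Sn0.
have [u /set_mem uS umin] := EVT_min_rV S0 sphere_compact cphi.
have u0 := Sn0 _ uS.
have Bu := pB _ u0.
pose c := phi u.
have key y : c * Axm B y <= Axm A y.
  case: (eqVneq y 0) => [->|y0]; first by rewrite !Axm0 // mulr0.
  have := umin _ (mem_set (normS _ y0)).
  rewrite /phi !Axm_Z -/(phi u) -/c.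
  have t0 : 0 < (`|y|^-1) ^+ m by rewrite exprn_gt0 // invr_gt0 normr_gt0.
  have By := pB _ y0.
  rewrite invfM mulrACA mulfV ?gt_eqF // mul1r ler_pdivlMr //.
have Fmin x : (Axm A - c \*: Axm B) u <= (Axm A - c \*: Axm B) x.
  change (Axm A u - c * Axm B u <= Axm A x - c * Axm B x).
  rewrite (_ : Axm A u - c * Axm B u = 0); first by rewrite subr_ge0 key.
  by rewrite /c /phi mulfVK ?gt_eqF // subrr.
have eig : Axm1 A u = c *: Axm1 B u.
  apply/rowP => i.
  have := fermat Fmin (is_deriveB (wA u i) (is_deriveZ c (wB u i))).
  rewrite !mxE /GRing.scale /= => /eqP H; apply/eqP; rewrite -subr_eq0; move: H.
  by rewrite mulrCA -mulrBr mulf_eq0 pnatr_eq0 (negbTE (lt0n_neq0 m0)).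
have : lmin <= c by apply: lmin_min; exists u.
move=> lc y; apply: le_trans (key y).
case: (eqVneq y 0) => [->|y0]; first by rewrite Axm0 // !mulr0.
by rewrite ler_pM2r // pB.
Qed.



Lemma poly_bd (c a M s : R) : 0 < c -> (`|M| + `|a| + 1) / c + 1 < s ->
  M < s ^+ 2 * c + s * a.
Proof.
move=> c0 hs.
have q0 : 0 <= (`|M| + `|a| + 1) / c by rewrite divr_ge0 // ltW.
have s1 : 1 < s by apply: le_lt_trans hs; rewrite lerDr.
have s0 : 0 < s by apply: lt_trans s1.
have h1 : `|M| + `|a| + 1 < s * c.
  by rewrite -ltr_pdivrMr //; apply: lt_trans _ hs; rewrite ltrDl.
have h2 : s * (`|M| + `|a| + 1) < s * (s * c) by rewrite ltr_pM2l.
rewrite !mulrDr mulr1 in h2.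
have h6 : - (s * `|a|) <= s * a.
  rewrite -mulrN; apply: ler_wpM2l; first exact: ltW.
  by rewrite lerNl -normrN ler_norm.
have h7 : `|M| <= s * `|M| by rewrite ler_peMl // ltW.
have h4 : M <= `|M| by apply: ler_norm.
rewrite expr2 -mulrA; lra.
Qed.

Lemma normS (y : 'rV[R]_n) : y != 0 -> `|(`|y|^-1 *: y)| = 1.
Proof.
move=> y0; rewrite normrZ normrV ?unitfE ?normr_eq0 // normr_id mulVf //.
by rewrite normr_eq0.
Qed.

Lemma S0 : (0 < n)%N -> [set x : 'rV[R]_n | `|x| = 1] !=set0.
Proof.
move=> n0; pose k0 : 'I_n := Ordinal n0.
have : (const_mx 1 : 'rV[R]_n) != 0.
  by apply/eqP => /matrixP /(_ ord0 k0); rewrite !mxE; apply/eqP; exact: oner_neq0.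
by move=> /normS H; eexists; exact: H.
Qed.

Lemma Sn0 (x : 'rV[R]_n) : `|x| = 1 -> x != 0.
Proof. by move=> Hx; apply/eqP => x0; move: Hx; rewrite x0 normr0 => /eqP; rewrite eq_sym oner_eq0. Qed.

Lemma f1_coercive A B : (0 < n)%N -> (0 < m)%N -> pos_def B -> coercive (f1 A B).
Proof.
move=> n0 m0 pB M.
have [zb /set_mem zbS bmin] := EVT_min_rV (S0 n0) sphere_compact
   ltac:(apply: continuous_subspaceT; exact: Axm_cont).
have cA : {within [set x : 'rV[R]_n | `|x| = 1], continuous (Axm A)}.
  by apply: continuous_subspaceT; exact: Axm_cont.
have [za /set_mem zaS amin] := EVT_min_rV (S0 n0) sphere_compact cA.
set b := Axm B zb; set a := Axm A za.
have b0 : 0 < b by apply: pB; apply: Sn0.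
have m0' : (0 : R) < m%:R by rewrite ltr0n.
pose c := b ^+ 2 / (2 * m)%:R; pose a' := a / m%:R.
have c0 : 0 < c by rewrite divr_gt0 ?exprn_gt0 // ltr0n muln_gt0.
exists ((`|M| + `|a'| + 1) / c + 1) => x Hx.
have q0 : 0 <= (`|M| + `|a'| + 1) / c by rewrite divr_ge0 // ltW.
set r := `|x| in Hx.
have r1 : 1 < r by apply: le_lt_trans Hx; rewrite lerDr.
have r0 : 0 < r by apply: lt_trans r1.
have x0 : x != 0 by rewrite -normr_eq0 -/r gt_eqF.
set s := r ^+ m.
have sr : r <= s by apply: ler_eXnr => //; exact: ltW.
have s0 : 0 < s by apply: lt_le_trans sr.
have xe : x = r *: (r^-1 *: x) by rewrite scalerA mulfV ?gt_eqF // scale1r.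
have zS : `|r^-1 *: x| = 1 by apply: normS.
have Bx : s * b <= Axm B x.
  rewrite [in Axm B x]xe Axm_Z ler_pM2l //; apply: bmin; exact: (@mem_set _ [set x | `|x| = 1] _ zS).
have Ax : s * a <= Axm A x.
  rewrite [in Axm A x]xe Axm_Z ler_pM2l // /a; apply: amin; exact: (@mem_set _ [set x | `|x| = 1] _ zS).
have := @poly_bd c a' M s c0 (lt_le_trans Hx sr) => /lt_le_trans; apply.
have -> : s ^+ 2 * c + s * a' = (s * b) ^+ 2 / (2 * m)%:R + (s * a) / m%:R.
  by rewrite /c /a' exprMn !mulrA.
rewrite /f1; apply: lerD; rewrite ler_pM2r ?invr_gt0 ?ltr0n ?muln_gt0 //.
rewrite !expr2; apply: ler_pM => //; rewrite ?mulr_ge0 // ltW //.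
Qed.



Lemma Axm1_0 A : (1 < m)%N -> Axm1 A 0 = 0.
Proof.
move=> m1; apply/rowP => i; rewrite !mxE; apply: big1 => s _.
by rewrite (bigD1 (Ordinal m1)) //= mxE mul0r mulr0.
Qed.

Lemma eig_Axm {A B lam x} : (0 < m)%N -> Br_eigenvector A B lam x ->
  Axm A x = lam * Axm B x.
Proof.
move=> m0 [_ e]; rewrite !Euler // e mulr_sumr; apply: eq_bigr => i _.
by rewrite mxE mulrCA.
Qed.

Lemma der_uniq {f : 'rV[R]_n -> R^o} {x v : 'rV[R]_n} {a b : R} :
  is_derive x v f a -> is_derive x v f b -> a = b.
Proof. by move=> [_ <-] [_ <-]. Qed.

Lemma crit_iff A B x : (0 < m)%N -> weakly_symmetric A -> weakly_symmetric B ->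
  critical_point (f1 A B) x <-> Axm B x *: Axm1 B x + Axm1 A x = 0.
Proof.
move=> m0 wA wB; have g := @grad_f1 A B m0 wA wB x; split.
  by move=> c; apply/matrixP => a i; rewrite ord1 (der_uniq (g i) (c i)) !mxE.
by move=> e i; have := g i; rewrite e.
Qed.

Lemma main (A B : tensor R m n) (lmin : R) :
  (0 < n)%N -> (0 < m)%N -> ~~ odd m ->
  weakly_symmetric A -> weakly_symmetric B -> pos_def B ->
  Br_eigenvalue A B lmin -> (forall lam, Br_eigenvalue A B lam -> lmin <= lam) ->
  (forall x, has_gradient (f1 A B) x (Axm B x *: Axm1 B x + Axm1 A x)) /\
  coercive (f1 A B) /\
  (forall x, critical_point (f1 A B) x <->
     (x = 0 \/ exists lam, lam < 0 /\ Br_eigenvector A B lam x /\ Axm B x = - lam)) /\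
  (lmin < 0 ->
     (exists x, Br_eigenvector A B lmin x /\ Axm B x = - lmin) /\
     (forall x, Br_eigenvector A B lmin x -> Axm B x = - lmin ->
        f1 A B x = - (lmin ^+ 2 / (2 * m)%:R) /\ (forall y, f1 A B x <= f1 A B y))) /\
  (0 <= lmin ->
     (forall x, critical_point (f1 A B) x <-> x = 0) /\
     (forall x, (forall y, f1 A B x <= f1 A B y) <-> x = 0)).
Proof.
move=> n0 m0 modd wA wB pB [y0 ey0] lmin_min.
have m1 : (1 < m)%N by case: m m0 modd {A B wA wB pB ey0 lmin_min} => [|[]].
have m0' : (0 : R) < m%:R by rewrite ltr0n.
have m2' : (0 : R) < (2 * m)%:R by rewrite ltr0n muln_gt0.
have ray := @rayleigh A B lmin n0 m0 wA wB pB lmin_min.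
have lowb y : Axm B y ^+ 2 / (2 * m)%:R + lmin * Axm B y / m%:R <= f1 A B y.
  by rewrite /f1 lerD2l ler_pM2r ?invr_gt0 // ray.
have f10 : f1 A B 0 = 0 by rewrite /f1 !Axm0 // expr2 !mul0r add0r.
have Bge0 y : 0 <= Axm B y.
  by case: (eqVneq y 0) => [->|/pB/ltW //]; rewrite Axm0.
have critb : forall x, critical_point (f1 A B) x <->
     (x = 0 \/ exists lam, lam < 0 /\ Br_eigenvector A B lam x /\ Axm B x = - lam).
  move=> x; rewrite crit_iff //; split.
    case: (eqVneq x 0) => [-> _|x0 e]; first by left.
    right; exists (- Axm B x); rewrite oppr_lt0 opprK pB //; split => //; split => //.
    by split => //; rewrite scaleNr; apply/eqP; rewrite -addr_eq0 addrC e.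
  case=> [->|[lam [_ [[_ e] ->]]]]; first by rewrite !Axm1_0 // scaler0 addr0.
  by rewrite e scaleNr addNr.
split; first exact: grad_f1.
split; first exact: f1_coercive.
split; first exact: critb.
split.
  move=> l0; split.
    have By0 := pB _ (proj1 ey0).
    pose q := - lmin / Axm B y0.
    have q0 : 0 < q by rewrite divr_gt0 // oppr_gt0.
    pose t := q `^ (m%:R^-1).
    have t0 : 0 < t by apply: powR_gt0.
    have tm : t ^+ m = q.
      by rewrite -powR_mulrn ?ltW // -powRrM mulVf ?gt_eqF // powRr1 // ltW.
    exists (t *: y0); split; last first.
      by rewrite Axm_Z tm /q mulfVK // gt_eqF.
    split; first by rewrite scaler_eq0 negb_or gt_eqF //= (proj1 ey0).
    by rewrite !Axm1_Z (proj2 ey0) !scalerA mulrC.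
  move=> x ex Bx.
  have Ax : Axm A x = - lmin ^+ 2 by rewrite (eig_Axm m0 ex) Bx mulrN expr2.
  have fx : f1 A B x = - (lmin ^+ 2 / (2 * m)%:R).
    rewrite /f1 Ax Bx sqrrN natrM; field.
    by rewrite gt_eqF ?andbT //.
  split => // y; rewrite fx; apply: le_trans (lowb y).
  set b := Axm B y.
  have h : 0 <= (b + lmin) ^+ 2 by apply: sqr_ge0.
  rewrite -subr_ge0 (_ : _ - _ = (b + lmin) ^+ 2 / (2 * m)%:R).
    by rewrite divr_ge0 // ltW.
  rewrite natrM; field.
  by rewrite gt_eqF ?andbT //.
move=> l0; split.
  move=> x; rewrite critb; split; last by left.
  case=> // [[lam [lam0 [ex _]]]].
  have := lmin_min lam (ex_intro _ x ex).
  by rewrite leNgt (lt_le_trans lam0 l0).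
have fpos y : y != 0 -> 0 < f1 A B y.
  move=> yn0; apply: lt_le_trans (lowb y).
  have By := pB _ yn0.
  apply: ltr_pwDl; last by rewrite !mulr_ge0 // ?invr_ge0 // ltW.
  by rewrite divr_gt0 // exprn_gt0.
move=> x; split; last first.
  move=> -> y; rewrite f10; case: (eqVneq y 0) => [->|/fpos/ltW //]; by rewrite f10.
move=> xmin; apply/eqP; apply/negPn/negP => /fpos.
by rewrite ltNge (le_trans (xmin 0)) // f10.
Qed.

End S.

Theorem theorem5 (R : realType) (m n : nat) (A B : tensor R m n) (lmin : R) :
  (0 < n)%N -> (0 < m)%N -> ~~ odd m ->
  weakly_symmetric A -> weakly_symmetric B -> pos_def B ->
  Br_eigenvalue A B lmin -> (forall lam, Br_eigenvalue A B lam -> lmin <= lam) ->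
  (* gradient formula *)
  (forall x, has_gradient (f1 A B) x (Axm B x *: Axm1 B x + Axm1 A x)) /\
  (* (a) *)
  coercive (f1 A B) /\
  (* (b) *)
  (forall x, critical_point (f1 A B) x <->
     (x = 0 \/ exists lam, lam < 0 /\ Br_eigenvector A B lam x /\ Axm B x = - lam)) /\
  (* (c) *)
  (lmin < 0 ->
     (exists x, Br_eigenvector A B lmin x /\ Axm B x = - lmin) /\
     (forall x, Br_eigenvector A B lmin x -> Axm B x = - lmin ->
        f1 A B x = - (lmin ^+ 2 / (2 * m)%:R) /\ (forall y, f1 A B x <= f1 A B y))) /\
  (* (d) *)
  (0 <= lmin ->
     (forall x, critical_point (f1 A B) x <-> x = 0) /\
     (forall x, (forall y, f1 A B x <= f1 A B y) <-> x = 0)).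
Proof. exact: main. Qed.
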